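(* Let $\delta\le1/4$ and let $\mathcal{I}$ be a $\delta$-ONI instance with $n$ agents. Then for every agent $i\in N^2(\mathcal{I})$, $v_i(2n+1)<\frac1{12}+\delta$.
   Context: Instance with agents $[n]$, goods $[m]$ ($m\ge2n$), additive valuations; goods with index larger than $m$ are dummy goods of value $0$. Ordered: $v_i(1)\ge\dots\ge v_i(m)$ for all $i$. Normalized: every agent $i$ has a partition of the goods into $n$ bundles each of value exactly $1$ to $i$ (an MMS partition). $\alpha$-irreducible: for every agent $i$, $v_i(1)<\alpha$, $v_i(\{2n-1,2n,2n+1\})<\alpha$, $v_i(\{3n-2,\dots,3n+1\})<\alpha$, $v_i(\{1,2n+1\})<\alpha$. $\delta$-ONI: ordered, normalized, $(3/4+\delta)$-irreducible. $B_k=\{k,2n-k+1\}$ for $k\in[n]$; $N^2(\mathcal{I})=\{i\in[n]:\exists k\in[n],\ v_i(B_k)>1\}$. *)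

(* Defs.v *)
From mathcomp Require Import all_boot all_order all_algebra.
Set Implicit Arguments. Unset Strict Implicit. Unset Printing Implicit Defensive.
Import Order.TTheory GRing.Theory Num.Theory.
Local Open Scope ring_scope.

(* Conventions: agents are 'I_n (0-based), goods are the natural numbers
   1..m (1-based, as in the paper); v i g is the value of good g to agent i.
   Goods with index > m are dummy goods of value 0 (a hypothesis of the
   instance). *)

Section Inst.
Variable R : realFieldType.
Variables n m : nat.
Variable v : 'I_n -> nat -> R.

Definition ordered : Prop :=
  forall (i : 'I_n) (g : nat), (1 <= g)%N -> (g < m)%N -> v i g.+1 <= v i g.

Definition normalized : Prop :=
  forall i : 'I_n, exists P : nat -> 'I_n,
    forall k : 'I_n, \sum_(1 <= g < m.+1 | P g == k) v i g = 1.

Definition irreducible (alpha : R) : Prop :=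
  forall i : 'I_n,
    [/\ v i 1 < alpha,
        v i (2 * n - 1)%N + v i (2 * n)%N + v i (2 * n + 1)%N < alpha,
        \sum_(3 * n - 2 <= g < 3 * n + 2) v i g < alpha
      & v i 1 + v i (2 * n + 1)%N < alpha].

Definition ONI (delta : R) : Prop :=
  [/\ ordered, normalized & irreducible (3 / 4 + delta)].

(* B_k = {k, 2n-k+1} for k in [n]; with k = j.+1 for j : 'I_n,
   2n - k + 1 = 2n - j. *)
Definition B_val (i : 'I_n) (j : 'I_n) : R := v i j.+1 + v i (2 * n - j)%N.

Definition inN2 (i : 'I_n) : Prop := exists j : 'I_n, B_val i j > 1.

End Inst.

(* Main.v *)
Require Import Defs.
From mathcomp Require Import all_boot all_order all_algebra.
From mathcomp Require Import lra zify.
Import Order.TTheory GRing.Theory Num.Theory.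
Local Open Scope ring_scope.

Lemma cnt (m k l : nat) : (k <= l)%N -> (l <= m)%N ->
  (\sum_(1 <= g < m.+1) ((k < g) && (g <= l)) = l - k)%N.
Proof.
move=> kl lm.
rewrite (@big_cat_nat _ _ _ k.+1) //= ?ltnS; last by lia.
rewrite (@big_cat_nat _ _ _ l.+1 k.+1) //= ?ltnS //.
rewrite (@eq_big_nat _ _ _ 1 k.+1 _ (fun _ => 0%N)); last first.
  move=> g /andP[? ?]; case: (boolP (k < g <= l)%N) => // /andP[? ?]; lia.
rewrite (@eq_big_nat _ _ _ l.+1 m.+1 _ (fun _ => 0%N)); last first.
  move=> g /andP[? ?]; case: (boolP (k < g <= l)%N) => // /andP[? ?]; lia.
rewrite (@eq_big_nat _ _ _ k.+1 l.+1 _ (fun _ => 1%N)); last first.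
  move=> g /andP[? ?]; case: (boolP (k < g <= l)%N) => // /negP H; exfalso; apply: H; apply/andP; split; lia.
rewrite !sum_nat_const_nat; lia.
Qed.

Lemma key (R : realFieldType) (x y : nat) (a b : R) :
  1 < 3 * b -> 1 < a + b -> 1 < 2 * a -> 0 <= a -> 0 <= b ->
  x%:R * a + y%:R * b <= 1 -> (2 * x + y <= 2)%N.
Proof.
move=> h1 h2 h3 ha hb h.
rewrite leqNgt; apply/negP => hc.
case: x h hc => [|[|x]] h hc.
- have hy : (3 <= y)%N by lia.
  have : 3%:R <= y%:R :> R by rewrite ler_nat.
  move: h; rewrite mul0r add0r => h hy'.
  have : 3%:R * b <= y%:R * b by rewrite ler_wpM2r.
  lra.
- have hy : (1 <= y)%N by lia.
  have : 1 <= y%:R :> R by rewrite ler1n.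
  move=> hy'.
  have : 1 * b <= y%:R * b by rewrite ler_wpM2r.
  move: h; rewrite mul1r; lra.
- have : 2%:R <= x.+2%:R :> R by rewrite ler_nat.
  move=> hx.
  have : 2%:R * a <= x.+2%:R * a by rewrite ler_wpM2r.
  have : 0 <= y%:R * b by apply: mulr_ge0.
  lra.
Qed.

Lemma mono (R : realFieldType) n m (v : 'I_n -> nat -> R) :
  ordered m v -> forall i g h, (1 <= g)%N -> (g <= h)%N -> (h <= m)%N -> v i h <= v i g.
Proof.
move=> ho i g h g1; elim: h => [|h IH] gh hm; first by lia.
rewrite leq_eqVlt in gh; case/orP: gh => [/eqP->//|gh].
apply: le_trans (IH _ _); [apply: ho|..]; lia.
Qed.

Theorem mainTheorem14 (R : realFieldType) (n m : nat) (v : 'I_n -> nat -> R)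
    (delta : R) :
  delta <= 1 / 4 ->
  (2 * n <= m)%N ->
  (forall (i : 'I_n) (g : nat), 0 <= v i g) ->
  (forall (i : 'I_n) (g : nat), (m < g)%N -> v i g = 0) ->
  ONI m v delta ->
  forall i : 'I_n, inN2 v i -> v i (2 * n + 1)%N < 1 / 12 + delta.
Proof.
move=> hd h2n hpos hzero [hord hnorm hirr] i [j hj].
rewrite ltNge; apply/negP => hc.
have [h1 _ _ h4] := hirr i.
move: hj; rewrite /B_val => hj.
have jn := ltn_ord j.
set a := v i j.+1 in hj *; set b := v i (2 * n - j)%N in hj *.
have ha1 : a <= v i 1 by have := @mono _ _ _ _ hord i 1%N j.+1; apply; lia.
have hab : b <= a by have := @mono _ _ _ _ hord i j.+1 (2 * n - j)%N; apply; lia.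
have hb3 : 1 < 3 * b by lra.
have ha2 : 1 < 2 * a by lra.
have [P HP] := hnorm i.
pose x (l : 'I_n) := (\sum_(1 <= g < m.+1 | P g == l) ((0 < g) && (g <= j.+1)))%N.
pose y (l : 'I_n) := (\sum_(1 <= g < m.+1 | P g == l) ((j.+1 < g) && (g <= 2 * n - j)))%N.
have term : forall g, ((0 < g) && (g <= j.+1))%N%:R * a
    + ((j.+1 < g) && (g <= 2 * n - j))%N%:R * b <= v i g.
  move=> g.
  case: (boolP ((0 < g) && (g <= j.+1))%N) => [/andP[? ?]|?];
  case: (boolP ((j.+1 < g) && (g <= 2 * n - j))%N) => [/andP[? ?]|?].
  - lia.
  - by rewrite mul1r mul0r addr0; have := @mono _ _ _ _ hord i g j.+1; apply; lia.
  - by rewrite mul1r mul0r add0r; have := @mono _ _ _ _ hord i g (2 * n - j)%N; apply; lia.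
  - by rewrite !mul0r addr0.
have bund : forall l, (2 * x l + y l <= 2)%N.
  move=> l; apply: (@key _ _ _ a b hb3 hj ha2); [lra|lra|].
  rewrite -[X in _ <= X](HP l) /x /y !natr_sum !mulr_suml -big_split /=.
  by apply: ler_sum => g _; apply: term.
have Sx : (\sum_(l < n) x l = j.+1)%N.
  have <- : (\sum_(1 <= g < m.+1) ((0 < g) && (g <= j.+1)) = j.+1)%N.
    by rewrite cnt ?subn0 //; lia.
  by rewrite (partition_big P predT).
have Sy : (\sum_(l < n) y l = 2 * n - j - j.+1)%N.
  have <- : (\sum_(1 <= g < m.+1) ((j.+1 < g) && (g <= 2 * n - j)) = 2 * n - j - j.+1)%N.
    by rewrite cnt //; lia.
  by rewrite (partition_big P predT).
have : (\sum_(l < n) (2 * x l + y l) <= \sum_(l < n) 2)%N by apply: leq_sum.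
rewrite big_split /= -big_distrr /= sum_nat_const card_ord Sx Sy.
lia.
Qed.
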